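(* Let $N\ge1$, $\theta\in[0,1)$, and real numbers $a_0,\dots,a_N$ with $\sum_k a_k^2=1$. Define the probability distribution $\Pr(l)=\frac{1}{N+1}\bigl|\sum_{k=0}^N a_k e^{2\pi i k(\theta-l/(N+1))}\bigr|^2$ for $l=0,\dots,N$, and $W=\sum_{l=0}^N\Pr(l)\bigl[1-\cos\bigl(2\pi(\theta-\tfrac{l}{N+1})\bigr)\bigr]$. Then $W=1-\sum_{k=1}^N a_{k-1}a_k-a_0a_N\cos(2\pi(N+1)\theta)$. Consequently, if $a_0=0$ then $W$ is independent of $\theta$, and the minimum of $W$ over all real $a_1,\dots,a_N$ with $\sum_{k=1}^N a_k^2=1$ (and $a_0=0$) equals $2\sin^2\frac{\pi}{2N+2}$, attained at $a_k=\sqrt{\frac{2}{N+1}}\sin\frac{k\pi}{N+1}$.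
   Context: This $W$ is the expected value of $1-\cos(2\pi(\hat\theta-\theta))$ for the estimator $\hat\theta=l/(N+1)$ of the phase $\theta$ of $U=\mathrm{diag}(1,e^{2\pi i\theta})$ in the parallel entangled strategy with Fourier-basis measurement. *)

(* Defs.v *)
From Stdlib Require Import Reals.
From Coquelicot Require Import Coquelicot.
Open Scope R_scope.

Definition cexpi (x : R) : C := (cos x, sin x).

Definition Pr (N : nat) (theta : R) (a : nat -> R) (l : nat) : R :=
  / INR (N + 1) *
  (Cmod (sum_n (fun k : nat =>
      Cmult (RtoC (a k))
            (cexpi (2 * PI * INR k * (theta - INR l / INR (N + 1))))) N)) ^ 2.

Definition W (N : nat) (theta : R) (a : nat -> R) : R :=
  sum_n (fun l : nat =>
    Pr N theta a l * (1 - cos (2 * PI * (theta - INR l / INR (N + 1))))) N.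

(* Main.v *)
Require Import Defs.
From Stdlib Require Import Reals Lra Lia ZArith.
From Coquelicot Require Import Coquelicot.
Open Scope R_scope.
Ltac feq := match goal with |- @eq _ ?a ?b => change (@eq R a b) end.
Ltac rring := try feq; ring.
Ltac rlra := try feq; lra.

Lemma snSR (f : nat -> R) n : sum_n f (S n) = sum_n f n + f (S n).
Proof. exact (sum_Sn f n). Qed.
Lemma sn0 (f : nat -> R) : sum_n f 0 = f 0%nat.
Proof. exact (sum_O f). Qed.
Lemma sn_ext (f g : nat -> R) n : (forall k, (k <= n)%nat -> f k = g k) -> sum_n f n = sum_n g n.
Proof. exact (sum_n_ext_loc f g n). Qed.
Lemma sn_plus (f g : nat -> R) n : sum_n (fun k => f k + g k) n = sum_n f n + sum_n g n.
Proof. induction n. rewrite !sn0; reflexivity. rewrite !snSR, IHn. rring. Qed.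
Lemma sn_scal (c : R) (f : nat -> R) n : sum_n (fun k => c * f k) n = c * sum_n f n.
Proof. induction n. rewrite !sn0; reflexivity. rewrite !snSR, IHn. rring. Qed.
Lemma sn_opp (f : nat -> R) n : sum_n (fun k => - f k) n = - sum_n f n.
Proof. induction n. rewrite !sn0; reflexivity. rewrite !snSR, IHn. rring. Qed.
Lemma sn_switch (u : nat -> nat -> R) m n :
  sum_n (fun i => sum_n (fun j => u i j) n) m = sum_n (fun j => sum_n (fun i => u i j) m) n.
Proof. exact (sum_n_switch u m n). Qed.
Lemma sn_first (f : nat -> R) n : sum_n f (S n) = f 0%nat + sum_n (fun k => f (S k)) n.
Proof. induction n. rewrite snSR, !sn0. rring. rewrite snSR, IHn, snSR. rring. Qed.
Lemma sn_const (c : R) n : sum_n (fun _ => c) n = INR (S n) * c.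
Proof. induction n. rewrite sn0. simpl; rring. rewrite snSR, IHn. rewrite !S_INR. rring. Qed.
Lemma sn_mul (f g : nat -> R) n :
  sum_n f n * sum_n g n = sum_n (fun j => sum_n (fun k => f j * g k) n) n.
Proof.
  transitivity (sum_n (fun j => sum_n g n * f j) n).
  { rewrite sn_scal. feq; ring. }
  apply sn_ext; intros. rewrite sn_scal. feq; ring.
Qed.
Lemma fst_sum (f : nat -> C) n : fst (sum_n f n) = sum_n (fun k => fst (f k)) n.
Proof. induction n. rewrite (sum_O f), sn0; reflexivity.
rewrite (sum_Sn f n), snSR, <- IHn. reflexivity. Qed.
Lemma snd_sum (f : nat -> C) n : snd (sum_n f n) = sum_n (fun k => snd (f k)) n.
Proof. induction n. rewrite (sum_O f), sn0; reflexivity.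
rewrite (sum_Sn f n), snSR, <- IHn. reflexivity. Qed.

Lemma prod2 y b : 2 * sin b * cos y = sin (y + b) - sin (y - b).
Proof. rewrite sin_plus, sin_minus. ring. Qed.

Lemma tele (x b : R) n : 2 * sin b * sum_n (fun l => cos (x - INR l * (2*b))) n
   = sin (x + b) - sin (x - INR n * (2*b) - b).
Proof.
  induction n.
  - rewrite sn0. simpl. replace (x - 0 * (2*b)) with x by ring.
    replace (x - 0 * (2*b) - b) with (x - b) by ring. apply prod2.
  - rewrite snSR. rewrite Rmult_plus_distr_l, IHn, prod2.
    rewrite S_INR.
    replace (x - (INR n + 1) * (2 * b) + b) with (x - INR n * (2 * b) - b) by ring.
    replace (x - (INR n + 1) * (2 * b) - b) with (x - (INR n + 1) * (2 * b) - b) by ring.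
    feq; ring.
Qed.

Definition Tsum (N : nat) (th : R) (m : R) : R :=
  sum_n (fun l => cos (m * (2*PI*(th - INR l / INR (N+1))))) N.

Lemma INRN1 N : INR (N+1) = INR N + 1.
Proof. rewrite plus_INR. simpl. ring. Qed.

Lemma Tsum_neg N th m : Tsum N th (-m) = Tsum N th m.
Proof. unfold Tsum. apply sn_ext; intros. replace (- m * (2 * PI * (th - INR k / INR (N + 1))))
  with (- (m * (2 * PI * (th - INR k / INR (N + 1))))) by ring. apply cos_neg. Qed.

Lemma Tsum_0 N th : Tsum N th 0 = INR (N+1).
Proof. unfold Tsum. rewrite (sn_ext _ (fun _ => 1)). rewrite sn_const. rewrite INRN1, S_INR. feq; ring.
  intros. rewrite Rmult_0_l. apply cos_0. Qed.

Lemma Tsum_top N th : Tsum N th (INR (N+1)) = INR (N+1) * cos (2 * PI * INR (N + 1) * th).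
Proof. unfold Tsum. rewrite (sn_ext _ (fun _ => cos (2 * PI * INR (N + 1) * th))).
  rewrite sn_const. rewrite INRN1, S_INR. feq; ring.
  intros. assert (INR (N+1) > 0) by (rewrite INRN1; pose proof (pos_INR N); lra).
  set (y := 2 * PI * INR (N + 1) * th).
  rewrite <- (cos_period (INR (N + 1) * (2 * PI * (th - INR k / INR (N + 1)))) k).
  f_equal. unfold y. field. lra.
Qed.

Lemma Tsum_mid N th p : (0 < p < N+1)%nat -> Tsum N th (INR p) = 0.
Proof.
  intros Hp. assert (Hn : INR (N+1) > 0) by (rewrite INRN1; pose proof (pos_INR N); lra).
  set (b := PI * INR p / INR (N+1)).
  assert (Hb : 0 < sin b).
  { apply sin_gt_0; unfold b.
    - apply Rdiv_lt_0_compat; [|lra]. apply Rmult_lt_0_compat. apply PI_RGT_0. apply lt_0_INR; lia.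
    - apply Rmult_lt_reg_r with (INR (N+1)); auto. unfold Rdiv. rewrite Rmult_assoc, Rinv_l by lra.
      rewrite Rmult_1_r. apply Rmult_lt_compat_l. apply PI_RGT_0. apply lt_INR; lia. }
  assert (2 * sin b * Tsum N th (INR p) = 0).
  { unfold Tsum. set (x := 2 * PI * INR p * th).
    rewrite (sn_ext _ (fun l => cos (x - INR l * (2*b)))).
    2:{ intros. f_equal. unfold x, b. field. lra. }
    rewrite tele.
    replace (x - INR N * (2 * b) - b) with ((x + b) + 2 * INR p * PI * (-1)).
    2:{ unfold b. rewrite INRN1. field. rewrite <- INRN1. lra. }
    replace ((x + b) + 2 * INR p * PI * (-1)) with ((x + b) - 2 * INR p * PI) by ring.
    rewrite <- (sin_period (x + b - 2 * INR p * PI) p).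
    replace (x + b - 2 * INR p * PI + 2 * INR p * PI) with (x + b) by ring. ring. }
  apply Rmult_integral in H. destruct H; [lra|auto].
Qed.

Definition Tval N th (z : Z) : R :=
  if Z.eqb z 0 then INR (N+1) else
  if Z.eqb (Z.abs z) (Z.of_nat (N+1)) then INR (N+1) * cos (2 * PI * INR (N + 1) * th) else 0.

Lemma Tsum_Z N th z : (- Z.of_nat (N+1) <= z <= Z.of_nat (N+1))%Z ->
  Tsum N th (IZR z) = Tval N th z.
Proof.
  intros Hz. unfold Tval.
  assert (Hp : forall p, (p <= N+1)%nat -> Tsum N th (INR p) = Tval N th (Z.of_nat p)).
  { intros p Hp. unfold Tval. destruct (Nat.eq_dec p 0).
    - subst. simpl. apply Tsum_0.
    - destruct (Nat.eq_dec p (N+1)).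
      + subst. rewrite Tsum_top. rewrite (proj2 (Z.eqb_neq _ _)) by lia.
        rewrite Z.abs_eq by lia. rewrite Z.eqb_refl. reflexivity.
      + rewrite Tsum_mid by lia. rewrite (proj2 (Z.eqb_neq _ _)) by lia.
        rewrite (proj2 (Z.eqb_neq (Z.abs (Z.of_nat p)) _)) by lia. reflexivity. }
  destruct (Z_le_gt_dec 0 z).
  - destruct (Z_of_nat_complete z l) as [p ->]. rewrite <- INR_IZR_INZ. apply Hp. lia.
  - replace (IZR z) with (- IZR (- z)) by (rewrite opp_IZR; ring). rewrite Tsum_neg.
    destruct (Z_of_nat_complete (-z) ltac:(lia)) as [p Hq]. rewrite Hq, <- INR_IZR_INZ.
    rewrite Hp by lia. unfold Tval. replace z with (- Z.of_nat p)%Z by lia.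
    rewrite Z.abs_opp. destruct (Z.eqb_spec (Z.of_nat p) 0); destruct (Z.eqb_spec (- Z.of_nat p) 0); try reflexivity; lia.
Qed.

Definition dl (b : bool) : R := if b then 1 else 0.

Definition Gf N th (j k : nat) : R :=
  dl (Nat.eqb j k) - /2 * dl (Nat.eqb j (S k)) - /2 * dl (Nat.eqb (S j) k)
  - /2 * cos (2 * PI * INR (N + 1) * th) * dl (Nat.eqb j N) * dl (Nat.eqb k 0)
  - /2 * cos (2 * PI * INR (N + 1) * th) * dl (Nat.eqb j 0) * dl (Nat.eqb k N).

Lemma FG N th j k : (1 <= N)%nat -> (j <= N)%nat -> (k <= N)%nat ->
  / INR (N+1) * (Tsum N th (INR j - INR k) - /2 * Tsum N th (INR j - INR k + 1)
     - /2 * Tsum N th (INR j - INR k - 1)) = Gf N th j k.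
Proof.
  intros HN Hj Hk.
  assert (Hn : INR (N+1) > 0) by (rewrite INRN1; pose proof (pos_INR N); lra).
  rewrite (INR_IZR_INZ j), (INR_IZR_INZ k), <- minus_IZR.
  replace (IZR (Z.of_nat j - Z.of_nat k) + 1) with (IZR (Z.of_nat j - Z.of_nat k + 1)) by (rewrite plus_IZR; ring).
  replace (IZR (Z.of_nat j - Z.of_nat k) - 1) with (IZR (Z.of_nat j - Z.of_nat k - 1)) by (rewrite minus_IZR; ring).
  rewrite !Tsum_Z by lia. unfold Tval, Gf, dl.
  set (c := cos (2 * PI * INR (N + 1) * th)).
  repeat match goal with
  | |- context [Z.eqb ?a ?b] => destruct (Z.eqb_spec a b); try (exfalso; lia)
  | |- context [Nat.eqb ?a ?b] => destruct (Nat.eqb_spec a b); try (exfalso; lia)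
  end; field; lra.
Qed.

Lemma sn_lin5 (f1 f2 f3 f4 f5 : nat -> R) c2 c3 c4 c5 n :
  sum_n (fun k => f1 k - c2 * f2 k - c3 * f3 k - c4 * f4 k - c5 * f5 k) n =
  sum_n f1 n - c2 * sum_n f2 n - c3 * sum_n f3 n - c4 * sum_n f4 n - c5 * sum_n f5 n.
Proof. induction n. rewrite !sn0; reflexivity. rewrite !snSR, IHn. rring. Qed.

Lemma sdelta (g : nat -> R) i n :
  sum_n (fun k => g k * dl (Nat.eqb k i)) n = if Nat.leb i n then g i else 0.
Proof.
  induction n.
  - rewrite sn0. unfold dl. destruct i; simpl; rring.
  - rewrite snSR, IHn. unfold dl.
    destruct (Nat.leb_spec i n); destruct (Nat.leb_spec i (S n));
      destruct (Nat.eqb_spec (S n) i); try (exfalso; lia); try (subst; rring); rring.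
Qed.

Lemma sn_zero n : sum_n (fun _ => 0) n = 0.
Proof. rewrite sn_const. rring. Qed.

Lemma dl_sym a b : dl (Nat.eqb a b) = dl (Nat.eqb b a).
Proof. rewrite Nat.eqb_sym. reflexivity. Qed.

Lemma inner N th (a : nat -> R) j : (j <= N)%nat ->
  sum_n (fun k => a k * Gf N th j k) N =
  a j - /2 * (match j with 0 => 0 | S j' => a j' end)
  - /2 * (if Nat.leb (S j) N then a (S j) else 0)
  - /2 * cos (2 * PI * INR (N + 1) * th) * (dl (Nat.eqb j N) * a 0%nat)
  - /2 * cos (2 * PI * INR (N + 1) * th) * (dl (Nat.eqb j 0) * a N).
Proof.
  intros Hj. unfold Gf.
  set (c := cos (2 * PI * INR (N + 1) * th)).
  rewrite (sn_ext _ (fun k => a k * dl (Nat.eqb k j) - /2 * (a k * dl (Nat.eqb j (S k)))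
     - /2 * (a k * dl (Nat.eqb k (S j))) - (/2 * c) * (dl (Nat.eqb j N) * (a k * dl (Nat.eqb k 0)))
     - (/2 * c) * (dl (Nat.eqb j 0) * (a k * dl (Nat.eqb k N))))).
  2:{ intros. rewrite (dl_sym j k), (dl_sym (S j) k). rring. }
  rewrite sn_lin5, !sn_scal, !sdelta.
  replace (Nat.leb j N) with true by (symmetry; apply Nat.leb_le; lia).
  replace (Nat.leb 0 N) with true by reflexivity.
  replace (Nat.leb N N) with true by (symmetry; apply Nat.leb_le; lia).
  assert (HX : sum_n (fun k : nat => a k * dl (j =? S k)) N = match j with 0 => 0 | S j' => a j' end).
  { destruct j.
  - rewrite (sn_ext _ (fun _ => 0)). apply sn_zero. intros; unfold dl; simpl; rring.
  - rewrite (sn_ext _ (fun k => a k * dl (Nat.eqb k j))). rewrite sdelta.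
    replace (Nat.leb j N) with true by (symmetry; apply Nat.leb_le; lia). reflexivity.
    intros. simpl. rewrite dl_sym. reflexivity. }
  rewrite HX. reflexivity.
Qed.

Lemma Psum (a : nat -> R) M :
  sum_n_m (fun k => a (k - 1)%nat * a k) 1 (S M) = sum_n (fun j => a j * a (S j)) M.
Proof.
  rewrite <- sum_n_m_S. unfold sum_n. apply sum_n_m_ext. intros n.
  replace (S n - 1)%nat with n by lia. reflexivity.
Qed.

Lemma outer N th (a : nat -> R) : (1 <= N)%nat ->
  sum_n (fun j => a j * sum_n (fun k => a k * Gf N th j k) N) N =
  sum_n (fun k => a k ^ 2) N - sum_n_m (fun k => a (k - 1)%nat * a k) 1 N
  - a 0%nat * a N * cos (2 * PI * INR (N + 1) * th).
Proof.
  intros HN. set (c := cos (2 * PI * INR (N + 1) * th)).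
  rewrite (sn_ext _ (fun j => a j ^ 2 - /2 * (a j * match j with 0 => 0 | S j' => a j' end)
    - /2 * (a j * (if Nat.leb (S j) N then a (S j) else 0))
    - (/2 * c) * (a j * dl (Nat.eqb j N) * a 0%nat) - (/2*c) * (a j * dl (Nat.eqb j 0) * a N))).
  2:{ intros. rewrite inner by lia. fold c. rring. }
  rewrite sn_lin5.
  rewrite (sn_ext (fun j => a j * dl (Nat.eqb j N) * a 0%nat) (fun j => (a 0%nat * a j) * dl (Nat.eqb j N)))
    by (intros; rring).
  rewrite (sn_ext (fun j => a j * dl (Nat.eqb j 0) * a N) (fun j => (a N * a j) * dl (Nat.eqb j 0)))
    by (intros; rring).
  rewrite !sdelta. replace (Nat.leb N N) with true by (symmetry; apply Nat.leb_le; lia).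
  replace (Nat.leb 0 N) with true by reflexivity.
  destruct N as [|M]; [lia|]. rewrite Psum.
  rewrite (sn_first (fun j => a j * match j with 0 => 0 | S j' => a j' end)).
  rewrite (snSR (fun j => a j * (if Nat.leb (S j) (S M) then a (S j) else 0))).
  replace (Nat.leb (S (S M)) (S M)) with false by (symmetry; apply Nat.leb_nle; lia).
  rewrite (sn_ext (fun j => a j * (if Nat.leb (S j) (S M) then a (S j) else 0)) (fun j => a j * a (S j))).
  2:{ intros. replace (Nat.leb (S k) (S M)) with true by (symmetry; apply Nat.leb_le; lia). reflexivity. }
  rewrite (sn_ext (fun k => a (S k) * a k) (fun j => a j * a (S j))) by (intros; rring).
  feq; field.
Qed.

Lemma sn2_plus (u v : nat -> nat -> R) n m :
  sum_n (fun j => sum_n (fun k => u j k) m) n + sum_n (fun j => sum_n (fun k => v j k) m) n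
  = sum_n (fun j => sum_n (fun k => u j k + v j k) m) n.
Proof. rewrite <- sn_plus. apply sn_ext; intros. rewrite sn_plus. reflexivity. Qed.

Lemma sn2_scal K (u : nat -> nat -> R) n m :
  K * sum_n (fun j => sum_n (fun k => u j k) m) n = sum_n (fun j => sum_n (fun k => K * u j k) m) n.
Proof. rewrite <- sn_scal. apply sn_ext; intros. rewrite sn_scal. reflexivity. Qed.

Definition psi N th l := 2*PI*(th - INR l / INR (N+1)).

Lemma Pr_exp N th a l : Pr N th a l =
  / INR (N+1) * sum_n (fun j => sum_n (fun k => a j * a k * cos ((INR j - INR k) * psi N th l)) N) N.
Proof.
  unfold Pr, Cmod. rewrite pow2_sqrt by (pose proof (pow2_ge_0 (fst (sum_n (fun k : nat => Cmult (a k) (cexpi (2 * PI * INR k * (th - INR l / INR (N + 1)))))N)));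
    pose proof (pow2_ge_0 (snd (sum_n (fun k : nat => Cmult (a k) (cexpi (2 * PI * INR k * (th - INR l / INR (N + 1)))))N))); lra).
  f_equal. rewrite fst_sum, snd_sum.
  rewrite (sn_ext _ (fun k => a k * cos (INR k * psi N th l))).
  2:{ intros. unfold cexpi, RtoC, Cmult, psi. simpl. replace (2 * PI * INR k * (th - INR l / INR (N + 1))) with
     (INR k * (2 * PI * (th - INR l / INR (N + 1)))) by ring. ring. }
  rewrite (sn_ext (fun k => snd _) (fun k => a k * sin (INR k * psi N th l))).
  2:{ intros. unfold cexpi, RtoC, Cmult, psi. simpl. replace (2 * PI * INR k * (th - INR l / INR (N + 1))) with
     (INR k * (2 * PI * (th - INR l / INR (N + 1)))) by ring. ring. }
  rewrite <- !Rsqr_pow2. unfold Rsqr. rewrite !sn_mul, sn2_plus.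
  apply sn_ext; intros j _. apply sn_ext; intros k _.
  replace ((INR j - INR k) * psi N th l) with (INR j * psi N th l - INR k * psi N th l) by ring.
  rewrite cos_minus. ring.
Qed.

Lemma sn_lin3 (f1 f2 f3 : nat -> R) c2 c3 n :
  sum_n (fun k => f1 k - c2 * f2 k - c3 * f3 k) n = sum_n f1 n - c2 * sum_n f2 n - c3 * sum_n f3 n.
Proof. induction n. rewrite !sn0; reflexivity. rewrite !snSR, IHn. rring. Qed.

Lemma W_formula N th a : (1 <= N)%nat ->
  W N th a = sum_n (fun k => a k ^ 2) N - sum_n_m (fun k => a (k - 1)%nat * a k) 1 N
  - a 0%nat * a N * cos (2 * PI * INR (N + 1) * th).
Proof.
  intros HN. assert (Hn : INR (N+1) > 0) by (rewrite INRN1; pose proof (pos_INR N); lra).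
  rewrite <- (outer N th a HN). unfold W.
  rewrite (sn_ext _ (fun l => sum_n (fun j => sum_n (fun k =>
     / INR (N+1) * (a j * a k) * (cos ((INR j - INR k) * psi N th l)
       - /2 * cos ((INR j - INR k + 1) * psi N th l) - /2 * cos ((INR j - INR k - 1) * psi N th l))) N) N)).
  2:{ intros l _. rewrite Pr_exp. fold (psi N th l).
      rewrite Rmult_comm, <- Rmult_assoc, sn2_scal. apply sn_ext; intros j _. apply sn_ext; intros k _.
      set (z := INR j - INR k). set (p := psi N th l).
      replace ((z + 1) * p) with (z * p + p) by ring. replace ((z - 1) * p) with (z * p - p) by ring.
      rewrite cos_plus, cos_minus. field. lra. }
  rewrite sn_switch. apply sn_ext; intros j Hj. rewrite sn_switch.
  rewrite <- sn_scal. apply sn_ext; intros k Hk.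
  rewrite sn_scal, sn_lin3. unfold psi. fold (Tsum N th (INR j - INR k)).
  fold (Tsum N th (INR j - INR k + 1)). fold (Tsum N th (INR j - INR k - 1)).
  rewrite <- (FG N th j k) by lia. feq; field. lra.
Qed.

Section S.
Variable M : nat.
Let n1 := INR (S M + 1).
Let al := PI / n1.
Let s (k : nat) := sin (INR k * al).

Lemma n1pos : n1 > 0.
Proof. unfold n1. rewrite INRN1. pose proof (pos_INR (S M)). lra. Qed.

Lemma s0 : s 0 = 0.
Proof. unfold s. simpl. rewrite Rmult_0_l. apply sin_0. Qed.

Lemma stop : s (S (S M)) = 0.
Proof. unfold s, al, n1. replace (S (S M)) with (S M + 1)%nat by lia.
  replace (INR (S M + 1) * (PI / INR (S M + 1))) with PI. apply sin_PI.
  field. pose proof n1pos. unfold n1 in H. lra. Qed.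

Lemma spos k : (1 <= k <= S M)%nat -> s k > 0.
Proof.
  intros Hk. pose proof n1pos as Hn. unfold s, al. apply sin_gt_0.
  - apply Rmult_lt_0_compat. apply lt_0_INR; lia. apply Rdiv_lt_0_compat. apply PI_RGT_0. exact Hn.
  - replace (INR k * (PI / n1)) with (PI * (INR k / n1)) by (field; lra).
    rewrite <- (Rmult_1_r PI) at 2. apply Rmult_lt_compat_l. apply PI_RGT_0.
    apply Rmult_lt_reg_r with n1; auto. unfold Rdiv. rewrite Rmult_assoc, Rinv_l by lra.
    rewrite Rmult_1_r, Rmult_1_l. unfold n1. apply lt_INR. lia.
Qed.

Lemma srec k : (1 <= k)%nat -> s (S k) + s (pred k) = 2 * cos al * s k.
Proof.
  intros Hk. unfold s. rewrite S_INR. replace (INR (pred k)) with (INR k - 1).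
  2:{ destruct k. lia. simpl pred. rewrite S_INR. ring. }
  replace ((INR k + 1) * al) with (INR k * al + al) by ring.
  replace ((INR k - 1) * al) with (INR k * al - al) by ring.
  rewrite sin_plus, sin_minus. ring.
Qed.

Definition uu (a : nat -> R) j := a j ^ 2 / s j.

Lemma ident (a : nat -> R) : a 0%nat = 0 ->
  sum_n (fun j => uu a j * s (S j) + uu a (S j) * s j) M = 2 * cos al * sum_n (fun k => a k ^ 2) (S M).
Proof.
  intros Ha0.
  assert (Hu0 : uu a 0 = 0) by (unfold uu; rewrite Ha0; unfold Rdiv; ring).
  rewrite sn_plus.
  assert (HA : sum_n (fun j => uu a j * s (S j)) M = sum_n (fun j => uu a j * s (S j)) (S M)).
  { rewrite snSR, stop. rewrite Rmult_0_r, Rplus_0_r. reflexivity. }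
  assert (HB : sum_n (fun j => uu a (S j) * s j) M = sum_n (fun j => uu a j * s (pred j)) (S M)).
  { rewrite sn_first, Hu0. rewrite Rmult_0_l, Rplus_0_l. apply sn_ext. intros. reflexivity. }
  rewrite HA, HB, <- sn_plus, <- sn_scal. apply sn_ext. intros j Hj.
  destruct j.
  - rewrite Hu0, Ha0. ring.
  - rewrite <- Rmult_plus_distr_l, srec by lia. unfold uu.
    pose proof (spos (S j) ltac:(lia)). field. lra.
Qed.

Lemma termwise (a : nat -> R) j : a 0%nat = 0 -> (j <= M)%nat ->
  2 * (a j * a (S j)) <= uu a j * s (S j) + uu a (S j) * s j.
Proof.
  intros Ha0 Hj. destruct j.
  - rewrite Ha0, s0. unfold uu. rewrite Ha0. unfold Rdiv. lra.
  - pose proof (spos (S j) ltac:(lia)) as H1. pose proof (spos (S (S j)) ltac:(lia)) as H2.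
    unfold uu. set (x := s (S j)) in *. set (y := s (S (S j))) in *.
    assert (uu_eq : a (S j) ^ 2 / x * y + a (S (S j)) ^ 2 / y * x - 2 * (a (S j) * a (S (S j)))
       = (a (S j) * y - a (S (S j)) * x) ^ 2 / (x * y)) by (field; lra).
    assert (0 <= (a (S j) * y - a (S (S j)) * x) ^ 2 / (x * y)).
    { apply Rdiv_le_0_compat. apply pow2_ge_0. apply Rmult_lt_0_compat; lra. }
    lra.
Qed.

Lemma termeq (a : nat -> R) lam : (forall k, a k = lam * s k) -> forall j,
  2 * (a j * a (S j)) = uu a j * s (S j) + uu a (S j) * s j.
Proof.
  intros Ha j. unfold uu. rewrite !Ha.
  assert (Hk : forall k, (lam * s k) ^ 2 / s k = lam ^ 2 * s k).
  { intros k. destruct (Req_dec (s k) 0) as [E|E]. rewrite E. unfold Rdiv. ring. field. exact E. }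
  rewrite !Hk. ring.
Qed.

End S.

Lemma sn_le (f g : nat -> R) n : (forall k, (k <= n)%nat -> f k <= g k) -> sum_n f n <= sum_n g n.
Proof. induction n; intros H. rewrite !sn0. apply H; lia.
  rewrite !snSR. apply Rplus_le_compat. apply IHn. intros; apply H; lia. apply H; lia. Qed.

Lemma sq_sum M : sum_n (fun k => sin (INR k * (PI / INR (S M + 1))) ^ 2) (S M) = INR (S M + 1) / 2.
Proof.
  assert (Hn : INR (S M + 1) > 0) by (rewrite INRN1; pose proof (pos_INR (S M)); lra).
  rewrite (sn_ext _ (fun k => /2 - /2 * cos (INR 1 * (2 * PI * (0 - INR k / INR (S M + 1)))))).
  2:{ intros k _. set (y := INR k * (PI / INR (S M + 1))).
      replace (INR 1 * (2 * PI * (0 - INR k / INR (S M + 1)))) with (- (2 * y)) by (unfold y; change (INR 1) with 1; field; lra).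
      rewrite cos_neg, cos_2a_sin. field. }
  assert (E : forall (f : nat -> R) n, sum_n (fun k => /2 - /2 * f k) n = INR (S n) * /2 - /2 * sum_n f n).
  { intros f n. induction n. rewrite !sn0. simpl; feq; field. rewrite !snSR, IHn, (S_INR (S n)). feq; field. }
  rewrite E. fold (Tsum (S M) 0 (INR 1)). rewrite Tsum_mid by lia. rewrite INRN1, !S_INR. feq; field.
Qed.

Lemma sq_shift (a : nat -> R) M :
  sum_n (fun k => a k ^ 2) (S M) = a 0%nat ^ 2 + sum_n_m (fun k => a k ^ 2) 1 (S M).
Proof. rewrite sn_first, <- sum_n_m_S. reflexivity. Qed.

Lemma half_angle M : 1 - cos (PI / INR (S M + 1)) = 2 * sin (PI / INR (2 * S M + 2)) ^ 2.
Proof.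
  assert (Hn : INR (S M + 1) > 0) by (rewrite INRN1; pose proof (pos_INR (S M)); lra).
  replace (PI / INR (S M + 1)) with (2 * (PI / INR (2 * S M + 2))).
  rewrite cos_2a_sin. ring.
  replace (INR (2 * S M + 2)) with (2 * INR (S M + 1)). field. lra.
  rewrite !plus_INR, mult_INR. simpl (INR 2). simpl (INR 1). ring.
Qed.

Theorem mainTheorem6 (N : nat) (HN : (1 <= N)%nat) :
  (forall (theta : R) (a : nat -> R),
     0 <= theta < 1 ->
     sum_n (fun k => a k ^ 2) N = 1 ->
     W N theta a =
       1 - sum_n_m (fun k => a (k - 1)%nat * a k) 1 N
         - a 0%nat * a N * cos (2 * PI * INR (N + 1) * theta))
  /\
  (forall a : nat -> R,
     a 0%nat = 0 ->
     sum_n (fun k => a k ^ 2) N = 1 ->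
     forall theta theta' : R, 0 <= theta < 1 -> 0 <= theta' < 1 ->
       W N theta a = W N theta' a)
  /\
  (forall theta : R, 0 <= theta < 1 ->
     (forall a : nat -> R,
        a 0%nat = 0 ->
        sum_n_m (fun k => a k ^ 2) 1 N = 1 ->
        2 * sin (PI / INR (2 * N + 2)) ^ 2 <= W N theta a)
     /\
     (let astar := fun k : nat => sqrt (2 / INR (N + 1)) * sin (INR k * PI / INR (N + 1)) in
      sum_n_m (fun k => astar k ^ 2) 1 N = 1 /\
      W N theta astar = 2 * sin (PI / INR (2 * N + 2)) ^ 2)).
Proof.
  destruct N as [|M]; [lia|].
  assert (Hn : INR (S M + 1) > 0) by (rewrite INRN1; pose proof (pos_INR (S M)); lra).
  split; [|split].
  - intros th a _ Hs. rewrite W_formula by lia. rewrite Hs. reflexivity.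
  - intros a Ha0 Hs th th' _ _. rewrite !W_formula by lia. rewrite Ha0. rring.
  - intros th _. split.
    + intros a Ha0 Hs.
      assert (Hsum : sum_n (fun k => a k ^ 2) (S M) = 1).
      { rewrite sq_shift, Hs, Ha0. rring. }
      rewrite W_formula by lia. rewrite Hsum, Psum, Ha0.
      assert (Hle : 2 * sum_n (fun j => a j * a (S j)) M <= 2 * cos (PI / INR (S M + 1)) * 1).
      { rewrite <- Hsum, <- (ident M a Ha0), <- sn_scal. apply sn_le. intros. apply termwise; auto. }
      rewrite <- half_angle. rlra.
    + intros astar.
      assert (Hlam : forall k, astar k = sqrt (2 / INR (S M + 1)) * sin (INR k * (PI / INR (S M + 1)))).
      { intros k. unfold astar. f_equal. f_equal. unfold Rdiv. ring. }
      assert (Hsq : sum_n (fun k => astar k ^ 2) (S M) = 1).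
      { rewrite (sn_ext _ (fun k => (2 / INR (S M + 1)) * sin (INR k * (PI / INR (S M + 1))) ^ 2)).
        rewrite sn_scal, sq_sum. feq; field. lra.
        intros k _. rewrite Hlam. rewrite Rpow_mult_distr, pow2_sqrt. reflexivity.
        apply Rlt_le, Rdiv_lt_0_compat; lra. }
      assert (Ha0 : astar 0%nat = 0).
      { rewrite Hlam. simpl INR. rewrite Rmult_0_l, sin_0. ring. }
      split.
      * rewrite sq_shift, Ha0 in Hsq. rewrite <- Hsq. replace (0 ^ 2) with 0 by ring. rewrite Rplus_0_l. reflexivity.
      * rewrite W_formula by lia. rewrite Hsq, Psum, Ha0.
        assert (Heq : 2 * sum_n (fun j => astar j * astar (S j)) M = 2 * cos (PI / INR (S M + 1)) * 1).
        { rewrite <- Hsq, <- (ident M astar Ha0), <- sn_scal. apply sn_ext. intros.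
          apply (termeq M astar (sqrt (2 / INR (S M + 1)))). exact Hlam. }
        rewrite <- half_angle. rlra.
Qed.
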